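(* (1) Let $(S,K,I)$ be an active split graph. Then $S$ is prime if and only if $\Phi(S)$ is connected. (2) Let $(S_1,K_1,I_1),\dots,(S_n,K_n,I_n)$ be pairwise vertex-disjoint prime split graphs and let $S=S_1\circ S_2\circ\cdots\circ S_n$, regarded as a split graph with bipartition $(K_1\cup\dots\cup K_n,\ I_1\cup\dots\cup I_n)$. Then $\Phi(S)=\Phi(S_1)\,\dot\cup\,\cdots\,\dot\cup\,\Phi(S_n)$ (disjoint union of multigraphs). (3) If $G$ is an active graph and $G=G_n\circ\cdots\circ G_1$ is its Tyshkevich decomposition into indecomposable factors each having at least one vertex (with $G_2,\dots,G_n$ split), then every factor $G_r$ is prime.
   Context: All graphs are finite and simple. A split graph is a graph $S$ whose vertex set is a disjoint union $V(S)=K\,\dot\cup\,I$ with $K$ a clique and $I$ an independent set; $(K,I)$ is called a bipartition of $S$, and $(S,K,I)$ denotes $S$ together with this fixed bipartition. A 2-switch in a graph $G$ is performed on four distinct vertices $a,b,c,d$ with $ab,cd\in E(G)$ and $ac,bd\notin E(G)$: it deletes $ab,cd$ and adds $ac,bd$; $a,b,c,d$ are said to participate in it. A vertex is active in $G$ if it participates in some 2-switch on $G$, otherwise inactive; $G$ is active if all its vertices are active. For a split graph $(S,K,I)$ and distinct $u,v\in I$, $\sigma_{uv}(S)$ is the number of induced subgraphs of $S$ isomorphic to $P_4$ containing both $u$ and $v$. The factor graph $\Phi(S)$ is the loopless multigraph with vertex set $I$ having exactly $\sigma_{uv}(S)$ parallel edges between $u$ and $v$. Graph notions (connected, complete, clique,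 etc.) applied to $\Phi(S)$ refer to its underlying simple graph, in which $u\sim v$ iff $\sigma_{uv}(S)\ge1$. Tyshkevich composition: for a split graph $(S,K,I)$ and a graph $G$ vertex-disjoint from $S$, $S\circ G$ is the graph with vertex set $V(S)\cup V(G)$ and edge set $E(S)\cup E(G)\cup\{xy: x\in K,\ y\in V(G)\}$ (a composition of a split graph with a split graph is split, with clique the union of the cliques and independent set the union of the independent sets). A graph $G$ is decomposable if $G=S\circ H$ for some split graph $S$ and graph $H$, each with at least one vertex; otherwise indecomposable. A graph is prime if it is active and indecomposable. Tyshkevich's theorem (known): every graph $G$ can be written as $G=G_n\circ\cdots\circ G_1$ with each $G_r$ indecomposable and $G_2,\dots,G_n$ split; with all $|G_r|\ge1$ this decomposition is unique up to isomorphism. *)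

(* Defs.v *)
(* Graphs are finite simple graphs whose vertex sets are
   finite subsets of a fixed finType T, with edges stored as 2-element sets. *)
From mathcomp Require Import all_boot.
Set Implicit Arguments. Unset Strict Implicit. Unset Printing Implicit Defensive.

Section Graphs.
Variable T : finType.

Record graph := Graph { gV : {set T}; gE : {set {set T}} }.

Definition wf (G : graph) : bool :=
  [forall e in gE G, (e \subset gV G) && (#|e| == 2)].

Definition adj (G : graph) (x y : T) : bool := [set x; y] \in gE G.

Definition clique (G : graph) (K : {set T}) : bool :=
  [forall x in K, forall y in K, (x != y) ==> adj G x y].

Definition indep (G : graph) (I : {set T}) : bool :=
  [forall x in I, forall y in I, ~~ adj G x y].

Definition split_graph (S : graph) (K I : {set T}) : bool :=
  [&& K :|: I == gV S, [disjoint K & I], clique S K & indep S I].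

Definition two_switch (G : graph) (a b c d : T) : bool :=
  [&& uniq [:: a; b; c; d], adj G a b, adj G c d, ~~ adj G a c & ~~ adj G b d].

Definition active_vertex (G : graph) (v : T) : bool :=
  [exists a, exists b, exists c, exists d,
     two_switch G a b c d && (v \in [:: a; b; c; d])].

Definition active (G : graph) : bool := [forall v in gV G, active_vertex G v].

Definition compose (S : graph) (K : {set T}) (H : graph) : graph :=
  Graph (gV S :|: gV H)
        (gE S :|: gE H :|: [set [set x; y] | x in K, y in gV H]).

Definition empty_graph : graph := Graph set0 set0.

Definition bigcompose (s : seq (graph * {set T})) : graph :=
  foldr (fun p G => compose p.1 p.2 G) empty_graph s.

Definition decomposable (G : graph) : Prop :=
  exists (S : graph) (K I : {set T}) (H : graph),
    [&& wf S, wf H, split_graph S K I, [disjoint gV S & gV H],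
        gV S != set0 & gV H != set0] /\ G = compose S K H.

Definition indecomposable (G : graph) : Prop := ~ decomposable G.

Definition prime_graph (G : graph) : Prop := active G /\ indecomposable G.

Definition induces_P4 (G : graph) (X : {set T}) : bool :=
  [exists x1, exists x2, exists x3, exists x4,
     [&& X == [set x1; x2; x3; x4], uniq [:: x1; x2; x3; x4],
         adj G x1 x2, adj G x2 x3, adj G x3 x4,
         ~~ adj G x1 x3, ~~ adj G x1 x4 & ~~ adj G x2 x4]].

Definition sigma (G : graph) (u v : T) : nat :=
  #|[set X : {set T} | [&& u \in X, v \in X & induces_P4 G X]]|.

(* underlying simple graph of the factor graph Phi(S) on vertex set I *)
Definition Phi_adj (G : graph) (I : {set T}) : rel T :=
  fun u v => [&& u \in I, v \in I, u != v & 0 < sigma G u v].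

Definition Phi_connected (G : graph) (I : {set T}) : Prop :=
  forall u v, u \in I -> v \in I -> connect (Phi_adj G I) u v.

End Graphs.

(* Main.v *)
Require Import Defs.
From mathcomp Require Import all_boot.
From Stdlib Require List.
Set Implicit Arguments. Unset Strict Implicit. Unset Printing Implicit Defensive.

Section Helpers.
Variable T : finType.
Implicit Types (G S H : graph T) (K I X : {set T}) (s : seq (graph T * {set T})) (p q : graph T * {set T}).

Definition edges_in G := forall e, e \in gE G -> e \subset gV G.

Lemma wf_edges G : wf G -> edges_in G.
Proof. by move=> /forall_inP W e /W /andP[]. Qed.

Lemma adjC G x y : adj G x y = adj G y x.
Proof. by rewrite /adj setUC. Qed.

Lemma adj_in G x y : edges_in G -> adj G x y -> (x \in gV G) /\ (y \in gV G).
Proof. by move=> E /E /subsetP s; split; apply: s; rewrite ?set21 ?set22. Qed.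

Lemma adj_compose S K H x y : adj (compose S K H) x y =
  [|| adj S x y, adj H x y |
     [exists k in K, exists h in gV H, [set x; y] == [set k; h]]].
Proof.
rewrite /adj /= !inE orbA; congr (_ || _).
apply/imset2P/exists_inP => [[k h kK hH ->]|[k kK /exists_inP [h hH /eqP ->]]].
  by exists k => //; apply/exists_inP; exists h.
by exists k h.
Qed.

Lemma adj_compose_S S K H x y : edges_in H -> [disjoint gV S & gV H] ->
  x \in gV S -> y \in gV S -> adj (compose S K H) x y = adj S x y.
Proof.
move=> EH D xS yS; rewrite adj_compose.
case: (adj S x y) => //=.
apply/negbTE; apply/norP; split.
  by apply/negP=> /(adj_in EH) [xH _]; rewrite (disjointFr D xS) in xH.
apply/negP=> /exists_inP [k _ /exists_inP [h hH /eqP E]].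
have : h \in [set x; y] by rewrite E set22.
by case/set2P=> ?; subst h; rewrite ?(disjointFr D xS) ?(disjointFr D yS) in hH.
Qed.

Lemma adj_compose_H S K H x y : edges_in S -> K \subset gV S -> [disjoint gV S & gV H] ->
  x \in gV H -> y \in gV H -> adj (compose S K H) x y = adj H x y.
Proof.
move=> ES KS D xH yH; rewrite adj_compose.
case: (adj H x y); rewrite ?orbT //=.
apply/negbTE; apply/norP; split.
  by apply/negP=> /(adj_in ES) [xS _]; rewrite (disjointFr D xS) in xH.
apply/negP=> /exists_inP [k kK /exists_inP [h hH /eqP E]].
have : k \in [set x; y] by rewrite E set21.
have kS := subsetP KS k kK.
by case/set2P=> ?; subst k; rewrite ?(disjointFr D kS) in xH yH.
Qed.

Lemma adj_cross S K H k h : k \in K -> h \in gV H -> adj (compose S K H) k h.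
Proof.
move=> kK hH; rewrite adj_compose; apply/orP; right; apply/orP; right.
by apply/exists_inP; exists k => //; apply/exists_inP; exists h.
Qed.

Lemma edges_compose S K H : edges_in S -> edges_in H ->
  (K \subset gV S \/ gV H = set0) -> edges_in (compose S K H).
Proof.
move=> ES EH KS e; rewrite /= !inE => /orP [/orP [/ES|/EH]|].
- by move=> s; apply: subset_trans s _; apply: subsetUl.
- by move=> s; apply: subset_trans s _; apply: subsetUr.
case/imset2P=> k h kK hH ->; apply/subsetP=> z /set2P [] ->; rewrite inE.
  case: KS => [/subsetP -> // | E]; by rewrite E inE in hH.
by rewrite hH orbT.
Qed.

Lemma sw_logic (A : rel T) (inK inI inH : pred T) a b c d :
  (forall x y, inK x -> inH y -> A x y) ->
  (forall x y, inI x -> inH y -> ~~ A x y) ->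
  (forall x y, inK x -> inK y -> x != y -> A x y) ->
  (forall x y, inI x -> inI y -> ~~ A x y) ->
  symmetric A ->
  (forall x, x \in [:: a; b; c; d] -> [|| inK x, inI x | inH x]) ->
  b != d -> A a b -> A c d -> ~~ A a c -> ~~ A b d -> inH a ->
  inH b /\ inH c /\ inH d.
Proof.
move=> F1 F2 F3 F4 sA cls0 bd Aab Acd Nac Nbd aH.
have cb : [|| inK b, inI b | inH b] by apply: cls0; rewrite !inE eqxx ?orbT.
have cc : [|| inK c, inI c | inH c] by apply: cls0; rewrite !inE eqxx ?orbT.
have cd : [|| inK d, inI d | inH d] by apply: cls0; rewrite !inE eqxx ?orbT.
have Hb : inH b.
  case/or3P: cb => // [bK|bI].
    case/or3P: cd => [dK|dI|dH].
    - by rewrite F3 in Nbd.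
    - case/or3P: cc => [cK|cI|cH].
      + by rewrite sA F1 in Nac.
      + by rewrite (negbTE (F4 _ _ cI dI)) in Acd.
      + by rewrite sA (negbTE (F2 _ _ dI cH)) in Acd.
    - by rewrite F1 in Nbd.
  by rewrite sA (negbTE (F2 _ _ bI aH)) in Aab.
have Hc : inH c.
  case/or3P: cc => // [cK|cI].
    by rewrite sA F1 in Nac.
  case/or3P: cd => [dK|dI|dH].
  - by rewrite sA F1 in Nbd.
  - by rewrite (negbTE (F4 _ _ cI dI)) in Acd.
  - by rewrite (negbTE (F2 _ _ cI dH)) in Acd.
split=> //; split=> //.
case/or3P: cd => // [dK|dI].
- by rewrite sA F1 in Nbd.
- by rewrite sA (negbTE (F2 _ _ dI Hc)) in Acd.
Qed.

Definition in4 (A : {set T}) (a b c d : T) :=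
  [&& a \in A, b \in A, c \in A & d \in A].

Lemma sw_side S K I H a b c d : wf S -> edges_in H -> [disjoint gV S & gV H] ->
  (gV H = set0 \/ split_graph S K I) ->
  two_switch (compose S K H) a b c d ->
  in4 (gV S) a b c d \/ in4 (gV H) a b c d.
Proof.
move=> wS EH D hyp.
have ES := wf_edges wS.
have KS : K \subset gV S \/ gV H = set0.
  case: (hyp) => [->|spl]; [by right|left].
  by case/and4P: spl => /eqP <- _ _ _; apply: subsetUl.
have EC := edges_compose ES EH KS.
case/and5P=> u Aab Acd Nac Nbd.
have inV : forall x, x \in [:: a; b; c; d] -> (x \in gV S) || (x \in gV H).
  move=> x; rewrite !inE => /or4P [] /eqP ->.
  - by case: (adj_in EC Aab) => /=; rewrite inE.
  - by case: (adj_in EC Aab) => _ /=; rewrite inE.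
  - by case: (adj_in EC Acd) => /=; rewrite inE.
  - by case: (adj_in EC Acd) => _ /=; rewrite inE.
case: hyp => [H0|spl].
  left; rewrite /in4.
  have F x : x \in [:: a; b; c; d] -> x \in gV S.
    by move/inV; rewrite H0 inE orbF.
  by rewrite !F // !inE eqxx ?orbT.
case/and4P: spl => /eqP VS DKI cK iI.
have KS' : K \subset gV S by rewrite -VS subsetUl.
have IS : I \subset gV S by rewrite -VS subsetUr.
have F1 : forall x y, x \in K -> y \in gV H -> adj (compose S K H) x y.
  by move=> x y; apply: adj_cross.
have F2 : forall x y, x \in I -> y \in gV H -> ~~ adj (compose S K H) x y.
  move=> x y xI yH; have xS := subsetP IS x xI.
  rewrite adj_compose; apply/norP; split.
    by apply/negP=> /(adj_in ES) [_ yS]; rewrite (disjointFr D yS) in yH.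
  apply/norP; split.
    by apply/negP=> /(adj_in EH) [xH _]; rewrite (disjointFr D xS) in xH.
  apply/negP=> /exists_inP [k kK /exists_inP [h hH /eqP E]].
  have : k \in [set x; y] by rewrite E set21.
  case/set2P=> ?; subst k.
    by rewrite (disjointFr DKI kK) in xI.
  by rewrite (disjointFr D (subsetP KS' _ kK)) in yH.
have F3 : forall x y, x \in K -> y \in K -> x != y -> adj (compose S K H) x y.
  move=> x y xK yK xy; rewrite adj_compose.
  by move/forall_inP: cK => /(_ x xK) /forall_inP /(_ y yK) /implyP /(_ xy) ->.
have F4 : forall x y, x \in I -> y \in I -> ~~ adj (compose S K H) x y.
  move=> x y xI yI; rewrite adj_compose_S ?(subsetP IS) //.
  by move/forall_inP: iI => /(_ x xI) /forall_inP /(_ y yI).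
have sA : symmetric (adj (compose S K H)) by move=> x y; apply: adjC.
have cls : forall x, x \in [:: a; b; c; d] ->
   [|| x \in K, x \in I | x \in gV H].
  by move=> x /inV; rewrite -VS inE orbA.
move: u; rewrite /= !inE !negb_or => /andP [/and3P [ab ac ad] /andP [/andP [bc bd] _]].
have L := sw_logic F1 F2 F3 F4 sA.
have Nca : ~~ adj (compose S K H) c a by rewrite sA.
have Ndb : ~~ adj (compose S K H) d b by rewrite sA.
have Aba : adj (compose S K H) b a by rewrite sA.
have Adc : adj (compose S K H) d c by rewrite sA.
have db : d != b by rewrite eq_sym.
have ca : c != a by rewrite eq_sym.
have clsg : forall (p q r w : T), (forall x, x \in [:: p; q; r; w] -> x \in [:: a; b; c; d]) ->
   forall x : T, x \in [:: p; q; r; w] -> [|| x \in K, x \in I | x \in gV H].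
  by move=> p q r w M x /M; apply: cls.
have [aH|aH] := boolP (a \in gV H).
  right; case: (L a b c d cls bd Aab Acd Nac Nbd aH) => bH [cH dH].
  by rewrite /in4 aH bH cH dH.
have [bH|bH] := boolP (b \in gV H).
  right; case: (L b a d c (clsg _ _ _ _ _) ac Aba Adc Nbd Nac bH) => [x|aH' _].
    by rewrite !inE; case/or4P=> ->; rewrite ?orbT.
  by rewrite aH' in aH.
have [cH|cH] := boolP (c \in gV H).
  right; case: (L c d a b (clsg _ _ _ _ _) db Acd Aab Nca Ndb cH) => [x|_ [aH' _]].
    by rewrite !inE; case/or4P=> ->; rewrite ?orbT.
  by rewrite aH' in aH.
have [dH|dH] := boolP (d \in gV H).
  right; case: (L d c b a (clsg _ _ _ _ _) ca Adc Aba Ndb Nca dH) => [x|_ [_ aH']].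
    by rewrite !inE; case/or4P=> ->; rewrite ?orbT.
  by rewrite aH' in aH.
left.
have F x : x \in [:: a; b; c; d] -> x \notin gV H -> x \in gV S.
  by move=> /inV /orP [] // ->.
by rewrite /in4 !F // !inE eqxx ?orbT.
Qed.

Lemma P4_sw G X : induces_P4 G X -> exists x1 x2 x3 x4,
  [/\ X = [set x1; x2; x3; x4], two_switch G x1 x2 x3 x4 &
      [/\ adj G x2 x3, ~~ adj G x1 x4 & uniq [:: x1; x2; x3; x4]]].
Proof.
case/existsP=> x1 /existsP [x2 /existsP [x3 /existsP [x4]]].
case/and5P=> /eqP -> u a12 a23 /and4P [a34 n13 n14 n24].
by exists x1, x2, x3, x4; split=> //; apply/and5P.
Qed.

Lemma sw_transfer G1 G2 a b c d :
  (forall x y, x \in [:: a; b; c; d] -> y \in [:: a; b; c; d] -> adj G1 x y = adj G2 x y) ->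
  two_switch G1 a b c d = two_switch G2 a b c d.
Proof.
move=> E; rewrite /two_switch !E // !inE eqxx ?orbT //.
Qed.

Fixpoint okl (s : seq (graph T * {set T})) : Prop :=
  match s with
  | [::] => True
  | p :: s' => [/\ wf p.1, s' = [::] \/ (exists I, split_graph p.1 p.2 I),
                  [disjoint gV p.1 & gV (bigcompose s')] & okl s']
  end.

Lemma gV_big s x : (x \in gV (bigcompose s)) = has (fun p => x \in gV p.1) s.
Proof. by elim: s => [|p s IH] /=; rewrite ?inE // IH. Qed.

Lemma KS_of S K I : split_graph S K I -> K \subset gV S.
Proof. by case/and4P=> /eqP <- _ _ _; apply: subsetUl. Qed.

Lemma edges_big s : okl s -> edges_in (bigcompose s).
Proof.
elim: s => [|p s IH] /=.
  by move=> _ e; rewrite inE.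
case=> wp hs D ok; apply: edges_compose (wf_edges wp) (IH ok) _.
by case: hs => [->|[I /KS_of]]; [right|left].
Qed.

Lemma in4_mem A a b c d x : in4 A a b c d -> x \in [:: a; b; c; d] -> x \in A.
Proof. by case/and4P=> ? ? ? ?; rewrite !inE => /or4P [] /eqP ->. Qed.

Lemma sw_big s a b c d : okl s -> two_switch (bigcompose s) a b c d ->
  exists2 p : graph T * {set T}, List.In p s & in4 (gV p.1) a b c d /\ two_switch p.1 a b c d.
Proof.
elim: s => [|p s IH] /=.
  by move=> _ /and5P [_ /(adj_in (edges_big (s:=[::]) I)) [] ]; rewrite inE.
case=> wp hs D ok sw.
have hyp : gV (bigcompose s) = set0 \/ split_graph p.1 p.2 (gV p.1 :\: p.2).
  case: hs => [->|[I sp]]; [by left | right].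
  case/and4P: sp => /eqP VS DKI cK iI.
  have -> : gV p.1 :\: p.2 = I.
    by rewrite -VS setDUl setDv set0U; apply/setDidPl; rewrite disjoint_sym.
  by rewrite /split_graph VS eqxx DKI cK iI.
case: (sw_side wp (edges_big ok) D hyp sw) => h4.
  by exists p; [left | split=> //; rewrite -(sw_transfer (G1 := compose p.1 p.2 (bigcompose s))) // => x y xs ys; rewrite (@adj_compose_S _ _ _ _ _ (edges_big ok) D) ?(in4_mem h4)].
have KS : p.2 \subset gV p.1.
  case: hs => [E|[I /KS_of] //]; subst s.
  by move: h4; rewrite /in4 inE.
have sw' : two_switch (bigcompose s) a b c d.
  rewrite -(sw_transfer (G1 := compose p.1 p.2 (bigcompose s))) //.
  by move=> x y xs ys; rewrite (@adj_compose_H _ _ _ _ _ (wf_edges wp) KS D) ?(in4_mem h4).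
have [q qs [h q2]] := IH ok sw'.
by exists q => //; right.
Qed.

Lemma adj_big s p x y : okl s -> List.In p s -> x \in gV p.1 -> y \in gV p.1 ->
  adj (bigcompose s) x y = adj p.1 x y.
Proof.
elim: s => [|q s IH] //= [wq hs D ok].
case=> [<- xq yq|ps xp yp].
  by rewrite (@adj_compose_S _ _ _ _ _ (edges_big ok) D).
have hasP' : forall z, z \in gV p.1 -> z \in gV (bigcompose s).
  move=> z zp; rewrite gV_big; elim: s ps {IH hs D ok} => [//|r s IHs] /= [->|/IHs ->].
    by rewrite zp.
  by rewrite orbT.
have xs := hasP' x xp; have ys := hasP' y yp.
have KS : q.2 \subset gV q.1.
  by case: hs => [E|[I /KS_of] //]; subst s.
by rewrite (@adj_compose_H _ _ _ _ _ (wf_edges wq) KS D) // IH.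
Qed.

Lemma P4_transfer1 G1 G2 X :
  (forall x y, x \in X -> y \in X -> adj G1 x y = adj G2 x y) ->
  induces_P4 G1 X -> induces_P4 G2 X.
Proof.
move=> E /existsP [x1 /existsP [x2 /existsP [x3 /existsP [x4]]]].
case/and5P=> /eqP EX u a12 a23 /and4P [a34 n13 n14 n24].
apply/existsP; exists x1; apply/existsP; exists x2; apply/existsP; exists x3.
apply/existsP; exists x4.
have M : forall z, z \in [:: x1; x2; x3; x4] -> z \in X.
  by move=> z; rewrite EX !inE -!orbA.
have m1 : x1 \in X by apply: M; rewrite !inE eqxx ?orbT.
have m2 : x2 \in X by apply: M; rewrite !inE eqxx ?orbT.
have m3 : x3 \in X by apply: M; rewrite !inE eqxx ?orbT.
have m4 : x4 \in X by apply: M; rewrite !inE eqxx ?orbT.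
by rewrite EX eqxx u -!E // a12 a23 a34 n13 n14 n24.
Qed.

Lemma P4_inV G X : edges_in G -> induces_P4 G X -> X \subset gV G.
Proof.
move=> EG /P4_sw [x1 [x2 [x3 [x4 [-> /and5P [_ a12 a34 _ _] _]]]]].
case: (adj_in EG a12) => h1 h2; case: (adj_in EG a34) => h3 h4.
by apply/subsetP=> z; rewrite !inE -!orbA => /or4P [] /eqP ->.
Qed.

Lemma P4_big s X : okl s -> induces_P4 (bigcompose s) X ->
  exists2 p : graph T * {set T}, List.In p s & X \subset gV p.1 /\ induces_P4 p.1 X.
Proof.
move=> ok P4; have := P4; case/P4_sw=> [x1 [x2 [x3 [x4 [EX sw _]]]]].
have [p ps [h4 _]] := sw_big ok sw.
have XS : X \subset gV p.1.
  by apply/subsetP=> z; rewrite EX => zX; apply: (in4_mem h4); move: zX; rewrite !inE -!orbA.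
exists p => //; split=> //; apply: P4_transfer1 P4 => x y xX yX.
by rewrite (adj_big ok ps) ?(subsetP XS).
Qed.

Lemma P4_big' s p X : okl s -> List.In p s -> wf p.1 -> induces_P4 p.1 X ->
  induces_P4 (bigcompose s) X.
Proof.
move=> ok ps wp P4; have XS := P4_inV (wf_edges wp) P4.
apply: P4_transfer1 P4 => x y xX yX.
by rewrite (adj_big ok ps) ?(subsetP XS).
Qed.

Lemma In_map (A : eqType) (f : A -> graph T * {set T}) (r : seq A) k :
  k \in r -> List.In (f k) [seq f j | j <- r].
Proof.
elim: r => [//|j r IH]; rewrite inE => /orP [/eqP ->|/IH]; by [left|right].
Qed.

Lemma In_map_inv (A : eqType) (f : A -> graph T * {set T}) (r : seq A) p :
  List.In p [seq f j | j <- r] -> exists2 k, k \in r & p = f k.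
Proof.
elim: r => [//|j r IH] /= [<-|/IH [k kr ->]].
  by exists j; rewrite ?inE ?eqxx.
by exists k; rewrite // inE kr orbT.
Qed.

Lemma okl_map n (Gs : 'I_n -> graph T) (Ks : 'I_n -> {set T}) (r : seq 'I_n) :
  uniq r -> (forall k, wf (Gs k)) ->
  (forall k j, k != j -> [disjoint gV (Gs k) & gV (Gs j)]) ->
  (forall r1 k r2, r = r1 ++ k :: r2 -> r2 = [::] \/ exists I, split_graph (Gs k) (Ks k) I) ->
  okl [seq (Gs k, Ks k) | k <- r].
Proof.
move=> + wG D; elim: r => [//|k r IH] /= /andP [kr ur] hyp; split=> //.
- case: (hyp [::] k r erefl) => [->|]; by [left|right].
- rewrite disjoints_subset; apply/subsetP => x xk; rewrite inE; apply/negP.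
  rewrite gV_big has_map => /hasP [j jr /= xj].
  have kj : k != j by apply: contraNneq kr => ->.
  by rewrite (disjointFr (D _ _ kj) xk) in xj.
- by apply: IH => // r1 j r2 E; apply: (hyp (k :: r1)); rewrite E.
Qed.

Definition Nb S K u := [set k in K | adj S k u].
Definition incomp S K u v :=
  ~~ (Nb S K u \subset Nb S K v) && ~~ (Nb S K v \subset Nb S K u).

Lemma clq S K x y : clique S K -> x \in K -> y \in K -> x != y -> adj S x y.
Proof.
by move/forall_inP=> c xK yK xy; move: (c x xK) => /forall_inP /(_ y yK) /implyP /(_ xy).
Qed.

Lemma ind S I x y : indep S I -> x \in I -> y \in I -> ~~ adj S x y.
Proof. by move/forall_inP=> c xI yI; move: (c x xI) => /forall_inP /(_ y yI). Qed.

Lemma inKI S K I z : split_graph S K I -> z \in gV S -> (z \in K) || (z \in I).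
Proof. by case/and4P=> /eqP <- _ _ _; rewrite inE. Qed.

Lemma KIF S K I z : split_graph S K I -> z \in K -> z \in I -> False.
Proof. by case/and4P=> _ D _ _ zK; rewrite (disjointFr D zK). Qed.

Lemma P4_split S K I X : wf S -> split_graph S K I -> induces_P4 S X ->
  exists x1 x2 x3 x4, [/\ X = [set x1; x2; x3; x4], x1 \in I, x4 \in I, x2 \in K &
    [/\ x3 \in K, adj S x1 x2, adj S x3 x4, ~~ adj S x1 x3 & ~~ adj S x2 x4]].
Proof.
move=> wS sp /P4_sw [x1 [x2 [x3 [x4 [EX /and5P [u a12 a34 n13 n24] [a23 n14 _]]]]]].
have ES := wf_edges wS.
case: (adj_in ES a12) => g1 g2; case: (adj_in ES a34) => g3 g4.
case/and4P: (sp) => _ _ cK iI.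
move: u; rewrite /= !inE !negb_or => /andP [/and3P [d12 d13 d14] /andP [/andP [d23 d24] _]].
have K2 : x2 \in K.
  case/orP: (inKI sp g2) => // I2.
  case/orP: (inKI sp g1) => [K1|I1]; last by rewrite (negbTE (ind iI I1 I2)) in a12.
  case/orP: (inKI sp g3) => [K3|I3]; last by rewrite (negbTE (ind iI I2 I3)) in a23.
  by rewrite (clq cK K1 K3 d13) in n13.
have K3 : x3 \in K.
  case/orP: (inKI sp g3) => // I3.
  case/orP: (inKI sp g4) => [K4|I4]; last by rewrite (negbTE (ind iI I3 I4)) in a34.
  by rewrite (clq cK K2 K4 d24) in n24.
have I1 : x1 \in I.
  case/orP: (inKI sp g1) => // K1; by rewrite (clq cK K1 K3 d13) in n13.
have I4 : x4 \in I.
  case/orP: (inKI sp g4) => // K4; by rewrite (clq cK K2 K4 d24) in n24.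
by exists x1, x2, x3, x4.
Qed.

Lemma incompC S K u v : incomp S K u v = incomp S K v u.
Proof. by rewrite /incomp andbC. Qed.

Lemma incomp_of S K u v k1 k2 : k1 \in K -> k2 \in K -> adj S k1 u -> ~~ adj S k1 v ->
  adj S k2 v -> ~~ adj S k2 u -> incomp S K u v.
Proof.
move=> K1 K2 a1 n1 a2 n2; apply/andP; split; apply/subsetPn.
  by exists k1; rewrite !inE ?K1 ?a1 ?(negbTE n1).
by exists k2; rewrite !inE ?K2 ?a2 ?(negbTE n2).
Qed.

Lemma Phi_char S K I u v : wf S -> split_graph S K I -> u \in I -> v \in I -> u != v ->
  (0 < sigma S u v) = incomp S K u v.
Proof.
move=> wS sp uI vI uv; case/and4P: (sp) => _ DKI cK iI.
apply/idP/idP.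
  rewrite card_gt0 => /set0Pn [X]; rewrite inE => /and3P [uX vX P4].
  have [x1 [x2 [x3 [x4 [EX I1 I4 K2 [K3 a12 a34 n13 n24]]]]]] := P4_split wS sp P4.
  have pos : forall w, w \in I -> w \in X -> (w == x1) || (w == x4).
    move=> w wI; rewrite EX !inE -!orbA => /or4P [] /eqP E; subst w;
      rewrite ?eqxx ?orbT //; by case: (KIF sp K2 wI) || case: (KIF sp K3 wI).
  case/orP: (pos u uI uX) => /eqP Eu; case/orP: (pos v vI vX) => /eqP Ev;
    subst u v; rewrite ?eqxx // in uv.
    by apply: (incomp_of K2 K3); rewrite // adjC.
  by rewrite incompC; apply: (incomp_of K2 K3); rewrite // adjC.
case/andP=> /subsetPn [k1]; rewrite !inE => /andP [K1 a1] n1.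
move=> /subsetPn [k2]; rewrite !inE => /andP [K2 a2] n2.
rewrite K1 /= in n1; rewrite K2 /= in n2.
rewrite card_gt0; apply/set0Pn; exists [set u; k1; k2; v].
rewrite !inE !eqxx ?orbT /=.
apply/existsP; exists u; apply/existsP; exists k1; apply/existsP; exists k2.
apply/existsP; exists v.
have uk1 : u != k1 by apply/negP=> /eqP E; subst; case: (KIF sp K1 uI).
have uk2 : u != k2 by apply/negP=> /eqP E; subst; case: (KIF sp K2 uI).
have vk1 : k1 != v by apply/negP=> /eqP E; subst; case: (KIF sp K1 vI).
have vk2 : k2 != v by apply/negP=> /eqP E; subst; case: (KIF sp K2 vI).
have k12 : k1 != k2 by apply/negP=> /eqP E; subst; rewrite a1 in n2.
rewrite eqxx /= !inE !negb_or uk1 uk2 uv k12 vk1 vk2 /=.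
rewrite adjC a1 (clq cK K1 K2 k12) a2 /= adjC n2 (ind iI uI vI) /=.
by [].
Qed.

Lemma sigmaC G u v : sigma G u v = sigma G v u.
Proof. by rewrite /sigma; apply: eq_card => X; rewrite !inE andbCA. Qed.

Lemma connect_ind' (e : rel T) (P : pred T) x y :
  (forall a b, connect e x a -> P a -> e a b -> P b) -> P x -> connect e x y -> P y.
Proof.
move=> step Px /connectP [l pth ->].
have aux : forall (l : seq T) a, connect e x a -> P a -> path e a l -> P (last a l).
  elim=> [|z q IH] a ca Pa //= /andP [eaz pz].
  apply: IH pz; [exact: connect_trans ca (connect1 eaz) | exact: step ca Pa eaz].
exact: aux.
Qed.


Lemma sw_has_I S K I a b c d : wf S -> split_graph S K I -> two_switch S a b c d ->
  (a \in I) || (c \in I).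
Proof.
move=> wS sp /and5P [u Aab Acd Nac _]; have ES := wf_edges wS.
case/and4P: (sp) => _ _ cK _.
case: (adj_in ES Aab) => ga _; case: (adj_in ES Acd) => gc _.
case/orP: (inKI sp ga) => [Ka|->//]; case/orP: (inKI sp gc) => [Kc|->]; last by rewrite orbT.
move: u; rewrite /= !inE !negb_or => /andP [/and3P [_ ac _] _].
by rewrite (clq cK Ka Kc ac) in Nac.
Qed.

Lemma part1_conn_prime S K I : wf S -> split_graph S K I -> active S ->
  Phi_connected S I -> indecomposable S.
Proof.
move=> wS sp act conn [S' [K' [I' [H [/and5P [wS' wH sp' D /andP [n1 n2]] ES]]]]].
have side : forall a b c d, two_switch S a b c d ->
    in4 (gV S') a b c d \/ in4 (gV H) a b c d.
  by move=> a b c d; rewrite ES => /(sw_side wS' (wf_edges wH) D (or_intror sp')).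
have VS : gV S = gV S' :|: gV H by rewrite ES.
have getw : forall (A B : {set T}), A != set0 -> A \subset gV S ->
    (forall a b c d, two_switch S a b c d -> in4 A a b c d \/ in4 B a b c d) ->
    [disjoint A & B] -> exists2 w, w \in I & w \in A.
  move=> A B /set0Pn [x xA] AS sd DAB.
  move/forall_inP: act => /(_ x (subsetP AS x xA)) /existsP [a /existsP [b /existsP [c /existsP [d /andP [sw xs]]]]].
  have hA : in4 A a b c d.
    case: (sd _ _ _ _ sw) => // h4.
    by have := in4_mem h4 xs; rewrite (disjointFr DAB xA).
  case/orP: (sw_has_I wS sp sw) => wI.
    by exists a => //; apply: (in4_mem hA); rewrite inE eqxx.
  by exists c => //; apply: (in4_mem hA); rewrite !inE eqxx ?orbT.
have [w1 w1I w1S] : exists2 w, w \in I & w \in gV S'.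
  by apply: getw (gV H) _ _ _ D => //; rewrite VS subsetUl.
have [w2 w2I w2H] : exists2 w, w \in I & w \in gV H.
  apply: getw (gV S') _ _ _ _ => //; first by rewrite VS subsetUr.
    by move=> a b c d /side []; [right|left].
  by rewrite disjoint_sym.
have := conn w1 w2 w1I w2I.
move/(connect_ind' (P := fun z => z \in gV S')) => /(_ _ w1S) h.
have : w2 \in gV S'.
  apply: h => a b _ aS /and4P [_ _ _]; rewrite card_gt0 => /set0Pn [X].
  rewrite inE => /and3P [aX bX /P4_sw [x1 [x2 [x3 [x4 [EX sw _]]]]]].
  have mem : forall z, z \in X -> z \in [:: x1; x2; x3; x4].
    by move=> z; rewrite EX !inE -!orbA.
  case: (side _ _ _ _ sw) => h4; first by apply: (in4_mem h4); apply: mem.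
  by have := in4_mem h4 (mem _ aX); rewrite (disjointFr D aS).
by move=> w2S; rewrite (disjointFr D w2S) in w2H.
Qed.

Lemma graph_eta G : Graph (gV G) (gE G) = G.
Proof. by case: G. Qed.

Lemma Phi_sym G I : symmetric (Phi_adj G I).
Proof.
move=> x y; rewrite /Phi_adj sigmaC eq_sym.
by case: (x \in I); case: (y \in I).
Qed.

Lemma part1_prime_conn S K I : wf S -> split_graph S K I -> indecomposable S ->
  Phi_connected S I.
Proof.
move=> wS sp indec u1 v1 u1I v1I; apply/negPn/negP => nc; apply: indec.
case/and4P: (sp) => /eqP VS DKI cK iI.
set R := Phi_adj S I.
have csym := sym_connect_sym (Phi_sym S I).
have hR : forall x y, x \in I -> y \in I -> x != y -> R x y = incomp S K x y.
  by move=> x y xI yI xy; rewrite /R /Phi_adj xI yI xy /= (Phi_char wS sp).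
case: (arg_minnP (fun x => #|Nb S K x|) u1I) => u0 u0I minu0.
set C := [set x in I | connect R u0 x].
set K' := [set k in K | [exists x in C, adj S k x]].
have {}u0I : u0 \in I by []. have u0C : u0 \in C by rewrite inE u0I connect0.
have [v vI vC] : exists2 v, v \in I & v \notin C.
  case: (boolP (u1 \in C)) => u1C; last by exists u1.
  case: (boolP (v1 \in C)) => v1C; last by exists v1.
  move: u1C v1C; rewrite !inE u1I v1I /= => c1 c2.
  by rewrite (connect_trans _ c2) // in nc; rewrite csym.
have key : forall w, w \in I -> w \notin C -> forall u, u \in C -> Nb S K u \subset Nb S K w.
  move=> w wI wC u; rewrite inE => /andP [uI cu].
  have notR : forall a, connect R u0 a -> ~~ R a w.
    move=> a ca; apply/negP => Rw; move: wC; rewrite inE wI /=.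
    by rewrite (connect_trans ca (connect1 Rw)).
  have cmp : forall a, a \in I -> connect R u0 a ->
      (Nb S K a \subset Nb S K w) || (Nb S K w \subset Nb S K a).
    move=> a aI ca; have aw : a != w.
      by apply: contraNneq wC => <-; rewrite inE aI ca.
    by have := notR a ca; rewrite hR // /incomp negb_and !negbK.
  apply: (connect_ind' (P := fun x => Nb S K x \subset Nb S K w)) cu.
    move=> a b ca Pa Rab; have := Rab; rewrite /R /Phi_adj => /and4P [aI bI ab _].
    have cb : connect R u0 b by apply: connect_trans ca (connect1 Rab).
    case/orP: (cmp b bI cb) => // wb.
    by move: Rab; rewrite hR // => /andP [/negP []]; apply: subset_trans Pa wb.
  case/orP: (cmp u0 u0I (connect0 _ _)) => // wu0.
  have : Nb S K w == Nb S K u0 by rewrite eqEcard wu0 minu0.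
  by move/eqP => ->.
have K'sub : K' \subset K by apply/subsetP => x; rewrite inE => /andP [].
have Csub : C \subset I by apply/subsetP => x; rewrite inE => /andP [].
set VS' := K' :|: C.
set VH := (K :\: K') :|: (I :\: C).
have cross : forall x y, x \in VS' -> y \in VH -> adj S x y = (x \in K').
  move=> x y; rewrite !in_setU !in_setD => /orP [xK'|xC] /orP [/andP [yK' yK]|/andP [yC yI]].
  - have xK := subsetP K'sub x xK'; rewrite xK'.
    by apply: (clq cK xK yK); apply: contraNneq yK' => <-.
  - rewrite xK'; move: xK'; rewrite inE => /andP [xK /exists_inP [u uC au]].
    have := subsetP (key y yI yC u uC) x; rewrite !inE xK au /= => /(_ isT).
    by rewrite adjC.
  - have xI := subsetP Csub x xC.
    have -> : x \in K' = false by apply/negP => /(subsetP K'sub) xK; case: (KIF sp xK xI).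
    apply/negP => axy; move: yK'; rewrite inE yK /=; apply/negP/negPn.
    by apply/exists_inP; exists x => //; rewrite adjC.
  - have xI := subsetP Csub x xC.
    have -> : x \in K' = false by apply/negP => /(subsetP K'sub) xK; case: (KIF sp xK xI).
    by apply/negbTE; apply: ind iI xI yI.
have KIx : forall x, x \in K -> x \in I -> False by move=> x; apply: KIF sp.
set S' := Graph VS' [set e in gE S | e \subset VS'].
set H := Graph VH [set e in gE S | e \subset VH].
have wfsub : forall V : {set T}, wf (Graph V [set e in gE S | e \subset V]).
  move=> V; apply/forall_inP => e; rewrite inE => /andP [eS eV].
  by move/forall_inP: wS => /(_ e eS) /andP [_ ->]; rewrite eV.
have eV : gV S' :|: gV H = gV S.
  rewrite -VS; apply/setP => x; rewrite /= !in_setU !in_setD.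
  have h1 := subsetP K'sub x; have h2 := subsetP Csub x.
  case: (boolP (x \in K')) => a; first by rewrite (h1 a).
  case: (boolP (x \in C)) => b; first by rewrite (h2 b) /= orbT.
  by rewrite /=; case: (x \in K); case: (x \in I).
have DSH : [disjoint gV S' & gV H].
  rewrite disjoints_subset; apply/subsetP => x.
  have h1 := subsetP K'sub x; have h2 := subsetP Csub x.
  rewrite /= in_setC !in_setU !in_setD => /orP [a|b].
    have xI : (x \in I) = false by apply/negP => /(KIx _ (h1 a)).
    by rewrite a xI !andbF.
  have xK : (x \in K) = false by apply/negP => /KIx /(_ (h2 b)).
  by rewrite b xK !andbF.
exists S', K', C, H; split.
  rewrite wfsub wfsub /=.
  apply/and4P; split.
  - rewrite /split_graph /= eqxx /=; apply/and3P; split.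
    + by apply: disjointW K'sub Csub DKI.
    + apply/forall_inP => x xK'; apply/forall_inP => y yK'; apply/implyP => xy.
      rewrite /adj /= inE; apply/andP; split.
        by apply: clq cK _ _ xy; apply: (subsetP K'sub).
      by apply/subsetP => z /set2P [] ->; rewrite inE ?xK' ?yK'.
    + apply/forall_inP => x xC; apply/forall_inP => y yC.
      rewrite /adj /= inE negb_and; apply/orP; left.
      exact: (ind iI (subsetP Csub x xC) (subsetP Csub y yC)).
  - exact: DSH.
  - by apply/set0Pn; exists u0; rewrite /= inE u0C orbT.
  - by apply/set0Pn; exists v; rewrite /= in_setU in_setD in_setD vC vI orbT.
rewrite -[LHS]graph_eta /compose; congr Graph; first by rewrite eV.
apply/setP => e; rewrite /= !in_setU !in_set; apply/idP/idP.
  move=> eS; move/forall_inP: (wS) => /(_ e eS) /andP [eV' /cards2P [x [y [xy Ee]]]].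
  subst e.
  have xV : x \in gV S by apply: (subsetP eV'); rewrite set21.
  have yV : y \in gV S by apply: (subsetP eV'); rewrite set22.
  rewrite -eV !in_setU in xV yV.
  case/orP: xV => xV; case/orP: yV => yV.
  - apply/orP; left; apply/orP; left; rewrite eS /=.
    by apply/subsetP => z /set2P [] ->; rewrite in_setU.
  - apply/orP; right; apply/imset2P; exists x y; [ | by rewrite in_setU | by []].
    by have := cross x y; rewrite !in_setU => /(_ xV yV) <-.
  - apply/orP; right; rewrite setUC; apply/imset2P; exists y x; [ | by rewrite in_setU | by []].
    by have := cross y x; rewrite !in_setU adjC => /(_ yV xV) <-.
  - apply/orP; left; apply/orP; right; rewrite eS /=.
    by apply/subsetP => z /set2P [] ->; rewrite in_setU.
case/orP => [/orP [] /andP [] //|/imset2P [x y xK' yH ->]].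
by rewrite -[_ \in _]/(adj S x y) cross // in_setU xK'.
Qed.

End Helpers.

Lemma sorted_cat_cons (A : Type) (e : rel A) r1 k z r2 :
  sorted e (r1 ++ k :: z :: r2) -> e k z.
Proof.
elim: r1 => [/= /andP [] //|x r1 IH] /= h; apply: IH.
by move/path_sorted: h.
Qed.

Theorem theorem2p7 (T : finType) :
  (* (1) *)
  (forall (S : graph T) (K I : {set T}),
     wf S -> split_graph S K I -> active S ->
     (prime_graph S <-> Phi_connected S I)) /\
  (* (2) *)
  (forall (n : nat) (S : 'I_n -> graph T) (K I : 'I_n -> {set T}),
     (forall i, wf (S i)) ->
     (forall i, split_graph (S i) (K i) (I i)) ->
     (forall i, prime_graph (S i)) ->
     (forall i j, i != j -> [disjoint gV (S i) & gV (S j)]) ->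
     forall (i j : 'I_n) (u v : T), u \in I i -> v \in I j -> u != v ->
       sigma (bigcompose [seq (S k, K k) | k <- enum 'I_n]) u v
       = (if i == j then sigma (S i) u v else 0)) /\
  (* (3) : factor r : 'I_n stands for G_(r+1); G = G_n o ... o G_1 *)
  (forall (G : graph T) (n : nat) (Gs : 'I_n -> graph T) (Ks Is : 'I_n -> {set T}),
     wf G -> active G ->
     (forall r, wf (Gs r)) ->
     (forall r, gV (Gs r) != set0) ->
     (forall r j, r != j -> [disjoint gV (Gs r) & gV (Gs j)]) ->
     (forall r : 'I_n, 0 < val r -> split_graph (Gs r) (Ks r) (Is r)) ->
     (forall r, indecomposable (Gs r)) ->
     G = bigcompose [seq (Gs r, Ks r) | r <- rev (enum 'I_n)] ->
     forall r, prime_graph (Gs r)).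
Proof.
split.
  move=> S K I wS sp act; split.
    by case=> _ indec; apply: part1_prime_conn wS sp indec.
  by move=> conn; split => //; apply: part1_conn_prime wS sp act conn.
split.
  move=> n S K I wS sp pr D i j u v uI vJ uv.
  set s := [seq (S k, K k) | k <- enum 'I_n].
  have ok : okl s.
    by apply: okl_map (enum_uniq _) wS D _ => r1 k r2 _; right; exists (I k).
  have IS : forall k w, w \in I k -> w \in gV (S k).
    by move=> k w; case/and4P: (sp k) => /eqP <- _ _ _; rewrite inE orbC => ->.
  have pos : forall X, induces_P4 (bigcompose s) X ->
      exists k, X \subset gV (S k) /\ induces_P4 (S k) X.
    by move=> X /(P4_big ok) [p /In_map_inv [k _ ->] [XS P4]]; exists k.
  have uniqk : forall k k' w, w \in gV (S k) -> w \in gV (S k') -> k = k'.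
    move=> k k' w wk wk'; case: (eqVneq k k') => // /D kk'.
    by rewrite (disjointFr kk' wk) in wk'.
  rewrite /sigma; case: eqP => [Eij|ij].
    subst j; apply: eq_card => X; rewrite !inE.
    apply/and3P/and3P => [[uX vX P4]|[uX vX P4]]; split=> //.
      have [k [XS P4k]] := pos X P4.
      by rewrite -(uniqk k i u (subsetP XS u uX) (IS i u uI)).
    exact: (P4_big' ok (In_map (fun k => (S k, K k)) (mem_enum _ i)) (wS i) P4).
  apply/eqP; rewrite cards_eq0; apply/eqP/setP => X; rewrite !inE.
  apply/negbTE/negP => /and3P [uX vX /pos [k [XS _]]].
  have e1 := uniqk k i u (subsetP XS u uX) (IS i u uI).
  have e2 := uniqk k j v (subsetP XS v vX) (IS j v vJ).
  by apply: ij; rewrite -e1 -e2.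
move=> G n Gs Ks Is wG actG wGs ne D spl indec EG r; split; last exact: indec r.
set s := [seq (Gs k, Ks k) | k <- rev (enum 'I_n)].
have so : sorted (fun x y : 'I_n => val y < val x) (rev (enum 'I_n)).
  rewrite rev_sorted; have := iota_ltn_sorted 0 n.
  by rewrite -val_enum_ord sorted_map.
have ok : okl s.
  apply: okl_map wGs D _; first by rewrite rev_uniq enum_uniq.
  move=> r1 k [|z r2] E; [by left | right; exists (Is k); apply: spl].
  have Hs : sorted (fun x y : 'I_n => val y < val x) (r1 ++ k :: z :: r2) by rewrite -E.
  have /= hz := sorted_cat_cons Hs.
  exact: leq_ltn_trans (leq0n _) hz.
apply/forall_inP => v vr.
have vG : v \in gV G.
  by rewrite EG gV_big has_map; apply/hasP; exists r; rewrite ?mem_rev ?mem_enum.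
move/forall_inP: actG => /(_ v vG) /existsP [a /existsP [b /existsP [c /existsP [d /andP [sw vs]]]]].
rewrite EG in sw; have [p ps [h4 swp]] := sw_big ok sw.
case: (In_map_inv ps) => k _ Ep; subst p.
have vk := in4_mem h4 vs.
have Ekr : k = r.
  case: (eqVneq k r) => // /D kr.
  by rewrite (disjointFr kr vk) in vr.
subst k.
apply/existsP; exists a; apply/existsP; exists b; apply/existsP; exists c.
by apply/existsP; exists d; rewrite swp vs.
Qed.
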